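(* Let $G$ be a group satisfying the property $\mathsf{FM}$ and $\nu$ a conjugation-invariant pseudo-norm on $G$. Then $A_\nu$, with addition $[\mathtt{g}]+[\mathtt{h}]=[\mathtt{g}\cdot\mathtt{h}]$ and scalar multiplication $\lambda[\mathtt{g}]=[\mathtt{g}^{(\lambda)}]$, is a real vector space, and the function $\|[\mathtt{g}]\|_\nu=\|\mathtt{g}\|_\nu$ is a norm on it; i.e. $(A_\nu,\|\cdot\|_\nu)$ is a normed vector space.
   Context: A conjugation-invariant pseudo-norm on a group $G$ is a function $\nu\colon G\to\mathbb{R}_{\ge0}$ with $\nu(1)=0$, $\nu(f)=\nu(f^{-1})$, $\nu(fg)\le\nu(f)+\nu(g)$ and $\nu(gfg^{-1})=\nu(f)$ for all $f,g\in G$. Property $\mathsf{FM}$: for a subgroup $H\le G$, let $\nu_H(f)$ be the minimal $k$ such that $f=g_1h_1g_1^{-1}\cdots g_kh_kg_k^{-1}$ ($g_i\in G,h_i\in H$), $\infty$ if none; for $K\subset G$ let $\mathrm{D}^f_H(K)$ be the set of $h_0\in G$ such that for all $g_1,\dots,g_k\in G$ there is $h\in G$ with every element of $hh_0h^{-1}K(hh_0h^{-1})^{-1}$ commuting with every element of $\bigcup_i g_iHg_i^{-1}$. $(G,H)$ satisfies $\mathsf{FM}$ if $\nu_H<\infty$ on $G$ and $\mathrm{D}^f_H(h_1Hh_1^{-1}\cup\dots\cup h_kHh_k^{-1})\ne\emptyset$ for all $h_1,\dots,h_k\in G$; $G$ satisfies $\mathsf{FM}$ if some $(G,H)$ does.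 $A_G=\coprod_{k\ge0}(G\times\mathbb{R})^k$, whose elements are written as formal words $g_1^{s_1}\cdots g_k^{s_k}$, with empty word $1$. For $\mathtt{g}=g_1^{s_1}\cdots g_k^{s_k}$, $\mathtt{h}=h_1^{t_1}\cdots h_l^{t_l}$, $\lambda\in\mathbb{R}$: $\mathtt{g}\cdot\mathtt{h}$ is concatenation, $\bar{\mathtt{g}}=g_k^{-s_k}\cdots g_1^{-s_1}$, $\mathtt{g}^{(\lambda)}=g_1^{\lambda s_1}\cdots g_k^{\lambda s_k}$. $\|\mathtt{g}\|_\nu=\lim_{n\to\infty}\frac1n\nu(g_1^{[s_1n]}\cdots g_k^{[s_kn]})$ ($[\cdot]$ integer part), $\|1\|_\nu=0$. $\mathtt{g}\sim\mathtt{h}$ iff $\|\mathtt{g}\cdot\bar{\mathtt{h}}\|_\nu=0$; $A_\nu=A_G/\sim$. *)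

(* Defs.v *)
From HB Require Import structures.
From mathcomp Require Import all_boot all_order all_algebra.
From mathcomp Require Import all_classical all_reals all_analysis.

Set Implicit Arguments.
Unset Strict Implicit.
Unset Printing Implicit Defensive.

Import Order.TTheory GRing.Theory Num.Theory.
Import numFieldNormedType.Exports.
Local Open Scope classical_set_scope.

Section GroupDefs.
Local Open Scope group_scope.
Variable G : groupType.

Definition prod_seq (s : seq G) : G := foldr (fun x acc => x * acc) 1 s.

Definition gpowz (x : G) (z : int) : G :=
  match z with Posz n => x ^+ n | Negz n => (x ^+ n.+1)^-1 end.

Definition is_subgroup (H : set G) : Prop :=
  H 1 /\ (forall x y, H x -> H y -> H (x * y)) /\ (forall x, H x -> H x^-1).

(* f = g_1 h_1 g_1^-1 ... g_k h_k g_k^-1 with h_i in H, i.e. nu_H(f) < oo *)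
Definition conj_prod_of (H : set G) (f : G) : Prop :=
  exists s : seq (G * G), (forall p, p \in s -> H p.2) /\
    f = prod_seq (map (fun p => p.1 * p.2 * p.1^-1) s).

Definition conj_union (H : set G) (gs : seq G) : set G :=
  fun x => exists2 g, g \in gs & exists2 y, H y & x = g * y * g^-1.

Definition Df (H : set G) (K : set G) : set G :=
  fun h0 => forall gs : seq G, exists h : G,
    let c := h * h0 * h^-1 in
    forall k x, K k -> conj_union H gs x ->
      commute (c * k * c^-1) x.

Definition FM_pair (H : set G) : Prop :=
  is_subgroup H /\ (forall f, conj_prod_of H f) /\
  (forall hs : seq G, Df H (conj_union H hs) !=set0).

Definition FM : Prop := exists H : set G, FM_pair H.

End GroupDefs.

Section Words.
Local Open Scope ring_scope.
Variables (R : realType) (G : groupType).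

Definition is_ci_pseudonorm (nu : G -> R) : Prop :=
  [/\ nu 1%g = 0,
      (forall f, 0 <= nu f),
      (forall f, nu f = nu (f^-1)%g),
      (forall f g, nu (f * g)%g <= nu f + nu g) &
      (forall f g, nu (g * f * g^-1)%g = nu f)].

(* elements of A_G : formal words g_1^{s_1} ... g_k^{s_k} *)
Definition word := seq (G * R).

Definition wconcat (w1 w2 : word) : word := w1 ++ w2.
Definition wbar (w : word) : word := rev (map (fun p => (p.1, - p.2)) w).
Definition wscale (l : R) (w : word) : word := map (fun p => (p.1, l * p.2)) w.

Definition weval (n : nat) (w : word) : G :=
  prod_seq (map (fun p => gpowz p.1 (Num.floor (p.2 * n%:R))) w).

Definition wseq (nu : G -> R) (w : word) : R^nat :=
  fun n => nu (weval n w) / n%:R.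

Definition wnorm (nu : G -> R) (w : word) : R := lim (wseq nu w @ \oo).

Definition wequiv (nu : G -> R) (w1 w2 : word) : Prop :=
  wnorm nu (wconcat w1 (wbar w2)) = 0.

(* "(A_nu, ||.||_nu) is a normed real vector space", unfolded:
   the limits defining ||.||_nu exist, ~ is an equivalence relation,
   addition and scalar multiplication descend to A_nu = A_G/~ and satisfy
   the vector-space axioms there, ||.||_nu descends to A_nu and is a norm. *)
Definition A_nu_normed_vector_space (nu : G -> R) : Prop :=
  let eqv := wequiv nu in
  let nrm := wnorm nu in
  (forall w, cvg (wseq nu w @ \oo)) /\
  (forall w, eqv w w) /\
  (forall w1 w2, eqv w1 w2 -> eqv w2 w1) /\
  (forall w1 w2 w3, eqv w1 w2 -> eqv w2 w3 -> eqv w1 w3) /\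
  (forall w1 w1' w2 w2', eqv w1 w1' -> eqv w2 w2' ->
     eqv (wconcat w1 w2) (wconcat w1' w2')) /\
  (forall l w w', eqv w w' -> eqv (wscale l w) (wscale l w')) /\
  (forall w1 w2 w3, eqv (wconcat (wconcat w1 w2) w3) (wconcat w1 (wconcat w2 w3))) /\
  (forall w1 w2, eqv (wconcat w1 w2) (wconcat w2 w1)) /\
  (forall w, eqv (wconcat [::] w) w) /\
  (forall w, exists w', eqv (wconcat w w') [::]) /\
  (forall a b w, eqv (wscale a (wscale b w)) (wscale (a * b) w)) /\
  (forall w, eqv (wscale 1 w) w) /\
  (forall a w1 w2, eqv (wscale a (wconcat w1 w2))
                        (wconcat (wscale a w1) (wscale a w2))) /\
  (forall a b w, eqv (wscale (a + b) w) (wconcat (wscale a w) (wscale b w))) /\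
  (forall w w', eqv w w' -> nrm w = nrm w') /\
  (forall w, 0 <= nrm w) /\
  (forall w, nrm w = 0 <-> eqv w [::]) /\
  (forall a w, nrm (wscale a w) = `|a| * nrm w) /\
  (forall w1 w2, nrm (wconcat w1 w2) <= nrm w1 + nrm w2).

End Words.

(* Main.v *)
Require Import Defs.
From HB Require Import structures.
From mathcomp Require Import all_boot all_order all_algebra.
From mathcomp Require Import all_classical all_reals all_analysis.
From mathcomp Require Import ring lra.

Set Implicit Arguments.
Unset Strict Implicit.
Unset Printing Implicit Defensive.
Import Order.TTheory GRing.Theory Num.Theory.
Import numFieldNormedType.Exports.
Local Open Scope int_scope.

Section GroupLemmas.
Local Open Scope group_scope.
Variable G : groupType.
Implicit Types x y z : G.

Lemma prod_seq_cat (s1 s2 : seq G) : prod_seq (s1 ++ s2) = prod_seq s1 * prod_seq s2.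
Proof. by elim: s1 => [|x s IH] /=; rewrite ?mul1g // IH mulgA. Qed.

Lemma prod_seq_rcons (s : seq G) x : prod_seq (rcons s x) = prod_seq s * x.
Proof. by rewrite -cats1 prod_seq_cat /= mulg1. Qed.

Lemma prod_seq_revV (s : seq G) : prod_seq (rev (map (fun x : G => x^-1) s)) = (prod_seq s)^-1.
Proof.
elim: s => [|x s IH] /=; first by rewrite invg1.
by rewrite rev_cons prod_seq_rcons IH invgM.
Qed.

Lemma gpowz_nat (x : G) (n : nat) : gpowz x n = x ^+ n. Proof. by []. Qed.

Lemma gpowz_opp_nat (x : G) (n : nat) : gpowz x (- n%:Z)%R = (x ^+ n)^-1.
Proof. by case: n => [|n] //=; rewrite invg1. Qed.

Lemma expg_comm (x : G) m n : commute (x ^+ m) (x ^+ n).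
Proof. exact: commuteX2. Qed.

Lemma gpowz_sub (x : G) (m n : nat) : gpowz x (m%:Z - n%:Z)%R = x ^+ m * (x ^+ n)^-1.
Proof.
case: (leqP n m) => hnm.
  rewrite subzn // gpowz_nat.
  by rewrite -{2}(subnK hnm) expgnDr mulgK.
rewrite -opprB subzn ?(ltnW hnm) // gpowz_opp_nat.
rewrite -{2}(subnK (ltnW hnm)) expgnDr invgM.
by rewrite mulgA mulgV mul1g.
Qed.

Lemma int_natsub (a : int) : exists m n : nat, a = (m%:Z - n%:Z)%R.
Proof. case: a => n; [by exists n, 0%N; rewrite subr0 | exists 0%N, n.+1].
by rewrite NegzE sub0r. Qed.

Lemma gpowzD (x : G) (a b : int) : gpowz x (a + b)%R = gpowz x a * gpowz x b.
Proof.
have [m1 [n1 ->]] := int_natsub a; have [m2 [n2 ->]] := int_natsub b.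
have -> : (m1%:Z - n1%:Z + (m2%:Z - n2%:Z) = (m1 + m2)%N%:Z - (n1 + n2)%N%:Z)%R.
  by rewrite !PoszD; ring.
rewrite !gpowz_sub !expgnDr.
(* all powers of x commute *)
set A := x ^+ m1; set B := x ^+ m2; set C := x ^+ n1; set D := x ^+ n2.
rewrite invgM -!mulgA; congr (_ * _).
rewrite mulgA; apply: commute_sym; apply: commuteM.
  by apply: commute_sym; apply: commuteV; apply: expg_comm.
apply: commute_sym; apply: commuteV; apply: commute_sym; apply: commuteV; apply: expg_comm.
Qed.

Lemma gpowz0 (x : G) : gpowz x 0 = 1. Proof. by []. Qed.

Lemma gpowzN (x : G) a : gpowz x (- a)%R = (gpowz x a)^-1.
Proof. apply/esym/mulg1_eq; by rewrite -gpowzD subrr. Qed.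

End GroupLemmas.
Section NuLemmas.
Local Open Scope ring_scope.
Variables (R : realType) (G : groupType) (nu : G -> R).
Hypothesis Hnu : is_ci_pseudonorm nu.

Lemma nu1 : nu 1%g = 0. Proof. by case: Hnu. Qed.
Lemma nu_ge0 x : 0 <= nu x. Proof. by case: Hnu. Qed.
Lemma nuV x : nu (x^-1)%g = nu x. Proof. by case: Hnu => _ _ h _ _; rewrite -h. Qed.
Lemma nuM x y : nu (x * y)%g <= nu x + nu y. Proof. by case: Hnu. Qed.
Lemma nuJ g x : nu (g * x * g^-1)%g = nu x. Proof. by case: Hnu. Qed.
Lemma nuJV g x : nu (g^-1 * x * g)%g = nu x.
Proof. by rewrite -{2}(invgK g) nuJ. Qed.
Lemma nuC x y : nu (x * y)%g = nu (y * x)%g.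
Proof. by rewrite -(nuJ x (y * x)%g) !mulgA mulgK. Qed.
Lemma nu_mid x y z : nu (x * z * y)%g <= nu (x * y)%g + nu z.
Proof.
have -> : (x * z * y = (x * y) * (y^-1 * z * y))%g by rewrite !mulgA mulgK.
by rewrite -(nuJV y z); apply: nuM.
Qed.
Lemma nuM3 x y z : nu (x * y * z)%g <= nu x + nu y + nu z.
Proof. apply: (le_trans (nuM _ _)); rewrite lerD2r; exact: nuM. Qed.

Lemma nu_natexp g n : nu (g ^+ n)%g <= n%:R * nu g.
Proof.
elim: n => [|n IH]; first by rewrite expg0 nu1 mul0r.
rewrite expgS; apply: (le_trans (nuM _ _)).
by rewrite -addn1 natrD mulrDl mul1r [_ + nu g]addrC lerD2l.
Qed.

Lemma nu_gpowz g a : nu (gpowz g a) <= `|(a%:~R : R)| * nu g.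
Proof.
case: a => n /=.
  by rewrite ger0_norm ?ler0n //; exact: nu_natexp.
rewrite nuV NegzE mulrNz normrN ger0_norm ?ler0n //; exact: nu_natexp.
Qed.

Lemma nu_lip (l : seq (G * G)) :
  nu (prod_seq (map fst l) * (prod_seq (map snd l))^-1)%g <=
  \sum_(p <- l) nu (p.1 * p.2^-1)%g.
Proof.
elim: l => [|[x y] l IH] /=; first by rewrite big_nil invg1 mulg1 nu1.
rewrite big_cons /= invgM.
set X := prod_seq _; set Y := prod_seq _.
have -> : (x * X * (Y^-1 * y^-1) = x * ((X * Y^-1) * (y^-1 * x)) * x^-1)%g.
  by rewrite !mulgA mulgK.
rewrite nuJ; apply: (le_trans (nuM _ _)); rewrite addrC lerD //.
by rewrite nuC.
Qed.

Lemma nu_qh (P : G -> Prop) (D : R) :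
  (forall x y, P x -> P y -> P (x * y)%g) -> P 1%g ->
  (forall x y, P x -> P y -> nu (x * y * x^-1 * y^-1)%g <= D) ->
  forall l : seq (G * G), (forall p, p \in l -> P p.1 /\ P p.2) ->
  nu (prod_seq (map fst l) * prod_seq (map snd l) *
      (prod_seq (map (fun p => p.1 * p.2) l))^-1)%g <= (size l)%:R * D.
Proof.
move=> PM P1 HD; elim => [|[x y] l IH] Hl /=.
  by rewrite invg1 !mulg1 nu1 mul0r.
have [Px Py] := Hl _ (mem_head _ _).
have Hl' : forall p, p \in l -> P p.1 /\ P p.2.
  by move=> p pl; apply: Hl; rewrite in_cons pl orbT.
set X := prod_seq (map fst l); set Y := prod_seq (map snd l).
set S := prod_seq _.
have PX : P X.
  rewrite /X; elim: (l) Hl' => [|q l' IH'] Hq //=; apply: PM.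
    by case: (Hq _ (mem_head _ _)).
  by apply: IH' => p pl; apply: Hq; rewrite in_cons pl orbT.
have -> : (x * X * (y * Y) * (x * y * S)^-1 =
    x * ((X * y * X^-1 * y^-1) * (y * (X * Y * S^-1) * y^-1)) * x^-1)%g.
  by rewrite !invgM !mulgA !mulgVK.
rewrite nuJ (le_trans (nuM _ _)) // nuJ -addn1 natrD mulrDl mul1r addrC.
by apply: lerD; [apply: IH | apply: HD].
Qed.

End NuLemmas.
Section Gen.
Local Open Scope group_scope.
Variable G : groupType.

Inductive gen (S : seq G) : G -> Prop :=
| gen_base x : x \in S -> gen S x
| gen_one : gen S 1
| gen_mul x y : gen S x -> gen S y -> gen S (x * y)
| gen_inv x : gen S x -> gen S x^-1.

Definition subgrp (T : G -> Prop) :=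
  [/\ T 1, (forall x y, T x -> T y -> T (x * y)) & (forall x, T x -> T x^-1)].

Lemma gen_sub (S : seq G) (T : G -> Prop) :
  subgrp T -> (forall x, x \in S -> T x) -> forall x, gen S x -> T x.
Proof.
case=> T1 TM TV TS x; elim => [y yS | | y z _ Ty _ Tz | y _ Ty].
- exact: TS.
- exact: T1.
- exact: TM.
- exact: TV.
Qed.

Lemma subgrp_prod (T : G -> Prop) (s : seq G) :
  subgrp T -> (forall x, x \in s -> T x) -> T (prod_seq s).
Proof.
case=> T1 TM TV; elim: s => [|x s IH] Hs //=.
apply: TM; first by apply: Hs; rewrite mem_head.
by apply: IH => y ys; apply: Hs; rewrite in_cons ys orbT.
Qed.

Lemma gen_subgrp S : subgrp (gen S).
Proof. by split; [exact: gen_one | exact: gen_mul | exact: gen_inv]. Qed.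

Lemma gen_gpowz S x a : gen S x -> gen S (gpowz x a).
Proof.
move=> gx.
have gn : forall n, gen S (x ^+ n).
  by elim=> [|n IH]; [exact: gen_one | rewrite expgS; apply: gen_mul].
by case: a => n /=; [apply: gn | apply/gen_inv/gn].
Qed.

Lemma gen_mono S S' x : {subset S <= S'} -> gen S x -> gen S' x.
Proof.
move=> sub; apply: gen_sub; first exact: gen_subgrp.
by move=> y yS; apply: gen_base; apply: sub.
Qed.

Lemma commute1l (y : G) : commute 1 y.
Proof. by rewrite /commute mul1g mulg1. Qed.

Lemma commuteMl (x1 x2 y : G) : commute x1 y -> commute x2 y -> commute (x1 * x2) y.
Proof. by move=> h1 h2; apply: commute_sym; apply: commuteM. Qed.

Lemma commuteVl (x y : G) : commute x y -> commute x^-1 y.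
Proof. by move=> h; apply: commute_sym; apply: commuteV; apply: commute_sym. Qed.

Lemma conj_subgrp (c : G) (T : G -> Prop) :
  subgrp (fun y => forall x, T x -> commute (c * x * c^-1) y).
Proof.
split.
- by move=> x _; exact: commute1.
- by move=> y1 y2 h1 h2 x Tx; apply: commuteM; [apply: h1 | apply: h2].
- by move=> y h x Tx; apply: commuteV; apply: h.
Qed.

Lemma conj_subgrp2 (c : G) (T : G -> Prop) :
  subgrp (fun x => forall y, T y -> commute (c * x * c^-1) y).
Proof.
split.
- by move=> y _; rewrite mulg1 mulgV; exact: commute1l.
- move=> x1 x2 h1 h2 y Ty.
  have -> : c * (x1 * x2) * c^-1 = (c * x1 * c^-1) * (c * x2 * c^-1).
    by rewrite !mulgA mulgVK.
  by apply: commuteMl; [apply: h1 | apply: h2].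
- move=> x h y Ty.
  have -> : c * x^-1 * c^-1 = (c * x * c^-1)^-1 by rewrite !invgM invgK mulgA.
  by apply: commuteVl; apply: h.
Qed.

Lemma FM_decomp (H : set G) (S : seq G) : (forall f, conj_prod_of H f) ->
  exists hs : seq G, forall g, g \in S -> exists s : seq (G * G),
    (forall p, p \in s -> H p.2 /\ p.1 \in hs) /\
    g = prod_seq (map (fun p => p.1 * p.2 * p.1^-1) s).
Proof.
move=> HP; elim: S => [|g S [hs IH]]; first by exists [::].
have [s [Hs Eg]] := HP g.
exists (map fst s ++ hs) => g'; rewrite in_cons => /orP[/eqP -> | g'S].
  exists s; split => // p ps; split; first exact: Hs.
  by rewrite mem_cat map_f.
have [s' [Hs' Eg']] := IH _ g'S; exists s'; split => // p ps.
by have [? ?] := Hs' _ ps; split => //; rewrite mem_cat orbC; apply/orP; left.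
Qed.

Lemma FM_comm : FM G -> forall S : seq G, exists c : G,
  forall x y, gen S x -> gen S y -> commute (c * x * c^-1) y.
Proof.
move=> [H [_ [HP HD]]] S.
have [hs Hhs] := FM_decomp S HP.
have [h0 Dh0] := HD hs.
have [h Hh] := Dh0 hs.
set c := h * h0 * h^-1 in Hh.
pose K := conj_union H hs.
have KS : forall g, g \in S -> exists2 s : seq G, (forall k, k \in s -> K k) & g = prod_seq s.
  move=> g gS; have [s [Hs ->]] := Hhs g gS.
  exists (map (fun p => p.1 * p.2 * p.1^-1) s) => // k /mapP [p ps ->].
  by have [Hp2 Hp1] := Hs p ps; exists p.1 => //; exists p.2.
exists c.
have st1 : forall x, gen S x -> forall y, K y -> commute (c * x * c^-1) y.
  apply: gen_sub; first exact: conj_subgrp2.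
  move=> g gS y Ky; have [s sK ->] := KS g gS.
  have := @subgrp_prod (fun x => forall y, K y -> commute (c * x * c^-1) y) s
     (conj_subgrp2 c K).
  apply => // k ks y' Ky'; apply: Hh => //; exact: sK.
have st2 : forall y, gen S y -> forall x, gen S x -> commute (c * x * c^-1) y.
  apply: gen_sub; first exact: (conj_subgrp c (gen S)).
  move=> g gS; have [s sK ->] := KS g gS.
  have := @subgrp_prod (fun y => forall x, gen S x -> commute (c * x * c^-1) y) s
     (conj_subgrp c (gen S)).
  by apply => // k ks x'' gx''; apply: st1 => //; apply: sK.
by move=> x y gx gy; apply: st2.
Qed.

End Gen.
Section Comm.
Local Open Scope ring_scope.
Variables (R : realType) (G : groupType) (nu : G -> R).
Hypothesis Hnu : is_ci_pseudonorm nu.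

Lemma comm_bound' (c x' y : G) : commute x' y ->
  nu ((c^-1 * x' * c) * y * (c^-1 * x' * c)^-1 * y^-1)%g <= nu c + nu c + nu c + nu c.
Proof.
move=> H.
have H2 : forall A : G, (A * y^-1 * x'^-1 * y = A * x'^-1)%g.
  move=> A; rewrite -!mulgA; congr (_ * _)%g.
  have : commute x'^-1 y by apply: commuteVl.
  by rewrite /commute => ->; rewrite mulKg.
have -> : ((c^-1 * x' * c) * y * (c^-1 * x' * c)^-1 * y^-1 =
   c^-1 * (x' * (c * y * c^-1 * y^-1) * x'^-1) * (y * c * y^-1))%g.
  by rewrite !invgM !invgK !mulgA H2.
apply: (le_trans (nuM3 Hnu _ _ _)).
rewrite (nuV Hnu) (nuJ Hnu x') (nuJ Hnu y).
rewrite -!addrA lerD2l addrA lerD2r.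
have -> : (c * y * c^-1 * y^-1 = c * (y * c^-1 * y^-1))%g by rewrite !mulgA.
apply: (le_trans (nuM Hnu _ _)).
by rewrite (nuJ Hnu y) (nuV Hnu).
Qed.

Lemma comm_bound (c x y : G) : commute (c * x * c^-1)%g y ->
  nu (x * y * x^-1 * y^-1)%g <= nu c + nu c + nu c + nu c.
Proof.
move=> H; have := comm_bound' c H.
by rewrite !mulgA mulVg mul1g mulgVK.
Qed.

Lemma FM_bound : FM G -> forall S : seq G, exists D : R,
  forall x y, gen S x -> gen S y -> nu (x * y * x^-1 * y^-1)%g <= D.
Proof.
move=> hFM S; have [c Hc] := FM_comm hFM S.
exists (nu c + nu c + nu c + nu c) => x y gx gy; apply: comm_bound; exact: Hc.
Qed.

End Comm.
Section Analysis.
Local Open Scope ring_scope.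
Local Open Scope classical_set_scope.
Variable R : realType.
Implicit Types (u v : nat -> R).

Definition dn u : nat -> R := fun n => u n / n%:R.

Lemma eventually_ge (P : nat -> Prop) N : (forall n, (N <= n)%N -> P n) ->
  \forall n \near \oo, P n.
Proof. by move=> H; exists N; first by []; move=> n /= hn; apply: H. Qed.

Lemma cvg_Cn (C : R) : (fun n : nat => C / n%:R) @ \oo --> 0.
Proof.
have h : (fun n : nat => (n%:R : R)^-1) @ \oo --> 0.
apply/cvgrPdist_le => e e0.
have ie0 : 0 <= e^-1 by rewrite invr_ge0 ltW.
have := archi_boundP ie0; set N := Num.Def.archi_bound _ => hN.
have N0 : (0 < N)%N by rewrite -(ltr_nat R); apply: le_lt_trans hN; rewrite invr_ge0 ltW.
exists N; first by []; move=> n /= hn.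
have n0 : (0 < n%:R :> R) by rewrite ltr0n; apply: leq_trans hn.
rewrite sub0r normrN ger0_norm ?invr_ge0 ?ltW //.
rewrite -[X in _ < X](invrK e) ltf_pV2 ?posrE ?invr_gt0 //.
apply: (lt_le_trans hN); by rewrite ler_nat.
by rewrite -(mulr0 C); apply: cvgMr.
Qed.

Lemma squeeze0 u (y C : R) : (forall n, (0 < n)%N -> `|y - u n| <= C / n%:R) ->
  u n @[n --> \oo] --> y.
Proof.
move=> H; apply/cvgrPdist_le => e e0.
have := cvg_Cn C; move/cvgrPdist_le => /(_ e e0) => h1.
have h2 : \forall n \near \oo, (0 < n)%N := @eventually_ge _ 1%N (fun n h => h).
move: h1 h2; apply: filterS2 => n; rewrite sub0r normrN => h n0.
exact: (le_trans (H n n0) (le_trans (ler_norm _) h)).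
Qed.

Lemma dnD u v : dn (fun n => u n + v n) = (fun n => dn u n + dn v n).
Proof. by apply/funext => n; rewrite /dn mulrDl. Qed.

Lemma lim_le3 u v w (C : R) : cvg (dn u @ \oo) -> cvg (dn v @ \oo) -> cvg (dn w @ \oo) ->
  (forall n, u n <= v n + w n + C) ->
  lim (dn u @ \oo) <= lim (dn v @ \oo) + lim (dn w @ \oo).
Proof.
move=> cu cv cw H.
have cC := cvg_Cn C.
have cC' : cvg ((fun n : nat => C / n%:R) @ \oo) by apply/cvg_ex; exists 0; exact: cC.
have cvw0 : cvg ((fun n => dn v n + dn w n) @ \oo) by apply: is_cvgD.
have cvw : cvg ((fun n => dn v n + dn w n + C / n%:R) @ \oo) by apply: is_cvgD.
apply: (le_trans (ler_lim cu cvw _)).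
  apply: nearW => n; rewrite /dn -!mulrDl ler_wpM2r //; exact: H.
rewrite (limD cvw0 cC') (limD cv cw) (cvg_lim _ cC); last exact: Rhausdorff.
by rewrite addr0; apply: lexx.
Qed.

Lemma lim_ge0 u : (forall n, 0 <= u n) -> cvg (dn u @ \oo) -> 0 <= lim (dn u @ \oo).
Proof.
move=> H cu; apply: limr_ge => //.
by apply: nearW => n; rewrite /dn divr_ge0.
Qed.

Lemma dn0 : dn (fun _ => 0) = (fun _ => 0).
Proof. by apply/funext => n; rewrite /dn mul0r. Qed.

Lemma lim_dn0 : lim (dn (fun _ => 0) @ \oo) = 0.
Proof. by rewrite dn0 lim_cst //; exact: Rhausdorff. Qed.

Lemma cvg_dn0 : cvg (dn (fun _ => 0) @ \oo).
Proof. by rewrite dn0; exact: is_cvg_cst. Qed.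

Lemma lim_leC u (C : R) : (forall n, 0 <= u n) -> cvg (dn u @ \oo) -> (forall n, u n <= C) ->
  lim (dn u @ \oo) = 0.
Proof.
move=> H0 cu H; apply/eqP; rewrite eq_le lim_ge0 // andbT.
have := @lim_le3 u (fun _ => 0) (fun _ => 0) C cu cvg_dn0 cvg_dn0.
by rewrite lim_dn0 addr0; apply => n; rewrite !add0r.
Qed.

End Analysis.
Section Fekete.
Local Open Scope ring_scope.
Local Open Scope classical_set_scope.
Variable R : realType.
Implicit Types (u v : nat -> R).

Lemma subadd_mult v : (forall n m, v (n + m)%N <= v n + v m) ->
  forall q m r, v (q * m + r)%N <= q%:R * v m + v r.
Proof.
move=> Hv; elim=> [|q IH] m r; first by rewrite mul0n add0n mul0r add0r.
rewrite mulSn -addnA; apply: (le_trans (Hv _ _)).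
rewrite -addn1 natrD mulrDl mul1r (addrC (q%:R * v m)) -addrA lerD2l; exact: IH.
Qed.

Lemma le_sum_nonneg v m r : (forall n, 0 <= v n) -> (r < m)%N ->
  v r <= \sum_(i < m) v i.
Proof.
move=> H0 rm; rewrite (bigD1 (Ordinal rm)) //= lerDl.
by apply: sumr_ge0 => i _.
Qed.

Lemma fekete v : (forall n, 0 <= v n) -> (forall n m, v (n + m)%N <= v n + v m) ->
  cvg (dn v @ \oo).
Proof.
move=> H0 Hv.
pose E := [set x : R | exists2 n, (0 < n)%N & x = v n / n%:R].
have E1 : E (v 1%N / 1%:R) by exists 1%N.
have lbE : lbound E 0 by move=> x [n _ ->]; rewrite divr_ge0.
have hiE : has_inf E by split; [exists (v 1%N / 1%:R) | exists 0].
apply/cvg_ex; exists (inf E); apply/cvgrPdist_le => e e0.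
have e20 : 0 < e / 2 by rewrite divr_gt0.
have [x [m m0 ->] hx] := inf_adherent e20 hiE.
set B := \sum_(i < m) v i.
have := cvg_Cn B; move/cvgrPdist_le => /(_ _ e20).
have h2 : \forall n \near \oo, (0 < n)%N := @eventually_ge _ 1%N (fun n h => h).
move=> h1; move: h1 h2; apply: filterS2 => n; rewrite sub0r normrN => hB n0.
have n0' : (0 < n%:R :> R) by rewrite ltr0n.
have m0' : (0 < m%:R :> R) by rewrite ltr0n.
have infle : inf E <= v n / n%:R.
  by apply: ge_inf; [case: hiE | exists n].
rewrite ler_norml; apply/andP; split; last first.
  by rewrite lerBlDr; move: infle; rewrite /dn; lra.
rewrite lerNl opprB lerBlDr.
have Hn : v n <= (n %/ m)%:R * v m + B.
  rewrite {1}(divn_eq n m); apply: (le_trans (subadd_mult Hv _ _ _)).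
  rewrite lerD2l; apply: le_sum_nonneg => //; exact: ltn_pmod.
have Hq : (n %/ m)%:R * v m / n%:R <= v m / m%:R.
  rewrite ler_pdivrMr //.
  have qm : ((n %/ m) * m)%:R <= n%:R :> R by rewrite ler_nat leq_trunc_div.
  have vm0 : 0 <= v m / m%:R by rewrite divr_ge0 // ltW.
  have E' : v m / m%:R * ((n %/ m) * m)%:R = (n %/ m)%:R * v m.
    by rewrite natrM; field; rewrite lt0r_neq0.
  by rewrite -E'; apply: ler_wpM2l.
have hB' : B / n%:R <= e / 2 := le_trans (ler_norm _) hB.
have : dn v n <= v m / m%:R + B / n%:R.
  have ni0 : 0 <= (n%:R : R)^-1 by rewrite invr_ge0 ltW.
  rewrite /dn; apply: (le_trans (ler_wpM2r ni0 Hn)).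
  by rewrite mulrDl lerD2r.
move=> h; apply: (le_trans h); lra.
Qed.


End Fekete.

Section Fekete2.
Local Open Scope ring_scope.
Local Open Scope classical_set_scope.
Variable R : realType.
Implicit Types (u v : nat -> R).

Lemma fekete_q u (C : R) : (forall n, 0 <= u n) -> 0 <= C ->
  (forall n m, u (n + m)%N <= u n + u m + C) -> cvg (dn u @ \oo).
Proof.
move=> H0 C0 Hu.
have cv : cvg (dn (fun n => u n + C) @ \oo).
  apply: fekete => [k|k l]; first by rewrite addr_ge0.
  by have := Hu k l; lra.
have -> : dn u = (fun n => dn (fun k => u k + C) n - C / n%:R).
  by apply/funext => n; rewrite /dn mulrDl addrK.
apply: is_cvgB => //; apply/cvg_ex; exists 0; exact: cvg_Cn.
Qed.

Lemma lim_scale u v (a C L : R) : 0 < a -> u 0%N = 0 -> dn u @ \oo --> L ->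
  (forall n, `|v n - u `|Num.floor (a * n%:R)|%N| <= C) ->
  lim (dn v @ \oo) = a * L.
Proof.
move=> a0 u0 cu Hv.
pose m := fun k : nat => `|Num.floor (a * k%:R)|%N.
have mE : forall n, (m n)%:R = (Num.floor (a * n%:R))%:~R :> R.
  by move=> k; rewrite /m pmulrn gez0_abs // floor_ge0 mulr_ge0 ?ler0n // ltW.
have mle : forall n, (m n)%:R <= a * n%:R :> R by move=> n; rewrite mE floor_le.
have mgt : forall n, a * n%:R - 1 < (m n)%:R :> R.
  by move=> n; rewrite mE ltrBlDr -intrD1 floorD1_gt.
have ratio : (fun n => (m n)%:R / n%:R) @ \oo --> a.
  apply: (squeeze0 (C := 1)) => n n0.
  have n0' : (0 < n%:R :> R) by rewrite ltr0n.
  have -> : a - (m n)%:R / n%:R = (a * n%:R - (m n)%:R) / n%:R.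
    by field; rewrite lt0r_neq0.
  have d0 : 0 <= a * n%:R - (m n)%:R by rewrite subr_ge0.
  have ni0 : 0 <= (n%:R : R)^-1 by rewrite invr_ge0 ltW.
  rewrite normrM (ger0_norm d0) (ger0_norm ni0); apply: ler_wpM2r => //.
  by have := mgt n; lra.
have minf : m n @[n --> \oo] --> \oo.
  apply/cvgnyPge => A.
  have hA : 0 <= (A%:R + 1) / a by rewrite divr_ge0 // ltW.
  apply: (@eventually_ge _ (Num.Def.archi_bound ((A%:R + 1) / a))) => n hn.
  have := archi_boundP hA; rewrite -(ler_nat R) in hn => h.
  have : A%:R < (m n)%:R :> R.
    have h' : (A%:R + 1) / a < n%:R := lt_le_trans h hn.
    rewrite ltr_pdivrMr // in h'.
    by have := mgt n; lra.
  by rewrite ltr_nat => /ltnW.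
have cuc : (dn u \o m) @ \oo --> L := cvg_comp _ _ minf cu.
have ch : (fun n => dn u (m n) * ((m n)%:R / n%:R)) @ \oo --> L * a.
  exact: cvgM.
have err : (fun n => dn v n - dn u (m n) * ((m n)%:R / n%:R)) @ \oo --> 0.
  apply: (squeeze0 (C := C)) => n n0.
  have n0' : (0 < n%:R :> R) by rewrite ltr0n.
  have -> : dn u (m n) * ((m n)%:R / n%:R) = u (m n) / n%:R.
    case: (m n) => [|k]; first by rewrite /dn u0 !mul0r.
    have hk : (0 : R) < 1 + k%:R by have := ler0n R k; lra.
    rewrite /dn; field; rewrite (lt0r_neq0 n0') (lt0r_neq0 hk) //.
  have ni0 : 0 <= (n%:R : R)^-1 by rewrite invr_ge0 ltW.
  rewrite sub0r normrN /dn -mulrBl normrM (ger0_norm ni0).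
  by apply: ler_wpM2r => //; apply: Hv.
have : dn v @ \oo --> a * L.
  have -> : dn v = (fun n => (dn v n - dn u (m n) * ((m n)%:R / n%:R))
                     + dn u (m n) * ((m n)%:R / n%:R)).
    by apply/funext => n; rewrite subrK.
  by rewrite -(add0r (a * L)) mulrC; apply: cvgD.
by move/cvg_lim; apply; exact: Rhausdorff.
Qed.

End Fekete2.
Section Words2.
Local Open Scope ring_scope.
Variables (R : realType) (G : groupType) (nu : G -> R).
Hypothesis Hnu : is_ci_pseudonorm nu.
Implicit Types w : word R G.

Definition Ew (f : R -> int) (w : word R G) : G :=
  prod_seq (map (fun p => gpowz p.1 (f p.2)) w).
Definition Ewr (f : R -> int) (w : word R G) : G :=
  prod_seq (rev (map (fun p => gpowz p.1 (f p.2)) w)).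
Definition Mw (w : word R G) : R := \sum_(p <- w) nu p.1.

Lemma Mw_ge0 w : 0 <= Mw w.
Proof. by apply: sumr_ge0 => p _; apply: nu_ge0. Qed.

Lemma wevalE n w : weval n w = Ew (fun s => Num.floor (s * n%:R)) w.
Proof. by []. Qed.

Lemma weval_cat n w1 w2 : weval n (w1 ++ w2) = (weval n w1 * weval n w2)%g.
Proof. by rewrite /weval map_cat prod_seq_cat. Qed.

Lemma weval_scale n a w : weval n (wscale a w) = Ew (fun s => Num.floor (a * s * n%:R)) w.
Proof. by rewrite /weval /wscale -map_comp. Qed.

Lemma weval_bar n w : weval n (wbar w) = Ewr (fun s => Num.floor (- s * n%:R)) w.
Proof. by rewrite /weval /wbar map_rev -map_comp. Qed.

Lemma Ew_inv f w : ((Ew f w)^-1 = Ewr (fun s => - f s) w)%g.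
Proof.
rewrite /Ew /Ewr -prod_seq_revV -map_comp; congr (prod_seq (rev _)).
by apply: eq_map => p /=; rewrite gpowzN.
Qed.

Lemma nu_pow_diff (g : G) a b : nu (gpowz g a * (gpowz g b)^-1)%g <= `|((a - b)%:~R : R)| * nu g.
Proof. by rewrite -gpowzN -gpowzD; apply: nu_gpowz. Qed.

Lemma lip_wK w (f1 f2 : R -> int) (K : R -> R) :
  (forall s, `|((f1 s - f2 s)%:~R : R)| <= K s) ->
  nu (Ew f1 w * (Ew f2 w)^-1)%g <= \sum_(p <- w) K p.2 * nu p.1.
Proof.
move=> HK.
have := nu_lip Hnu [seq (gpowz p.1 (f1 p.2), gpowz p.1 (f2 p.2)) | p <- w].
rewrite -!map_comp => /le_trans; apply.
rewrite big_map; apply: ler_sum => p _ /=.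
apply: (le_trans (nu_pow_diff _ _ _)); apply: ler_wpM2r; [exact: nu_ge0 | exact: HK].
Qed.

Lemma lip_w w (f1 f2 : R -> int) (K : R) :
  (forall s, `|((f1 s - f2 s)%:~R : R)| <= K) ->
  nu (Ew f1 w * (Ew f2 w)^-1)%g <= K * Mw w.
Proof.
move=> HK; apply: (le_trans (lip_wK (K := fun _ => K) _ HK)).
by rewrite /Mw mulr_sumr.
Qed.

Lemma lip_wr w (f1 f2 : R -> int) (K : R) :
  (forall s, `|((f1 s - f2 s)%:~R : R)| <= K) ->
  nu (Ewr f1 w * (Ewr f2 w)^-1)%g <= K * Mw w.
Proof.
move=> HK.
have := nu_lip Hnu (rev [seq (gpowz p.1 (f1 p.2), gpowz p.1 (f2 p.2)) | p <- w]).
rewrite !map_rev -!map_comp => /le_trans; apply.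
rewrite big_rev big_map /Mw mulr_sumr; apply: ler_sum => p _ /=.
apply: (le_trans (nu_pow_diff _ _ _)); apply: ler_wpM2r; [exact: nu_ge0 | exact: HK].
Qed.

Lemma fl_le x : ((Num.floor x)%:~R : R) <= x. Proof. exact: floor_le. Qed.
Lemma fl_gt x : x - 1 < ((Num.floor x)%:~R : R).
Proof. by rewrite ltrBlDr -intrD1 floorD1_gt. Qed.

Lemma bar_bound n w : nu (weval n w * weval n (wbar w))%g <= 2 * Mw w.
Proof.
rewrite weval_bar wevalE -[Ew _ w]invgK Ew_inv nuC //.
apply: lip_wr => s; rewrite opprK intrD mulNr.
set x := s * n%:R.
have h1 := fl_le (- x); have h2 := fl_le x.
have h3 := fl_gt (- x); have h4 := fl_gt x.
rewrite ler_norml; apply/andP; split; lra.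
Qed.

Lemma bar_bound' n w : nu (weval n (wbar w) * weval n w)%g <= 2 * Mw w.
Proof. by rewrite nuC //; apply: bar_bound. Qed.

Lemma nu_le_div x y : nu x <= nu (x * y^-1)%g + nu y.
Proof. by rewrite -{1}(mulgVK y x); apply: nuM. Qed.

End Words2.
Section Words3.
Local Open Scope ring_scope.
Local Open Scope classical_set_scope.
Variables (R : realType) (G : groupType) (nu : G -> R).
Hypothesis Hnu : is_ci_pseudonorm nu.
Implicit Types w : word R G.

Lemma qadd w (f1 f2 f3 : R -> int) (K D : R) :
  (forall x y, gen (map fst w) x -> gen (map fst w) y -> nu (x * y * x^-1 * y^-1)%g <= D) ->
  (forall s, `|((f3 s - (f1 s + f2 s))%:~R : R)| <= K) ->
  nu (Ew f3 w * (Ew f1 w * Ew f2 w)^-1)%g <= K * Mw nu w + (size w)%:R * D.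
Proof.
move=> HD HK.
have h := @nu_qh _ _ _ Hnu (gen (map fst w)) D (@gen_mul _ _) (@gen_one _ _) HD
   [seq (gpowz p.1 (f1 p.2), gpowz p.1 (f2 p.2)) | p <- w].
have hl : forall p, p \in [seq (gpowz p.1 (f1 p.2), gpowz p.1 (f2 p.2)) | p <- w] ->
    gen (map fst w) p.1 /\ gen (map fst w) p.2.
  move=> p /mapP [q qw ->] /=.
  have gq : gen (map fst w) q.1 by apply: gen_base; apply: map_f.
  by split; apply: gen_gpowz.
move: {h hl}(h hl).
rewrite -(map_comp fst) -(map_comp snd) size_map.
have EE3 : [seq (p.1 * p.2)%g | p <- [seq (gpowz p.1 (f1 p.2), gpowz p.1 (f2 p.2)) | p <- w]]
    = [seq gpowz p.1 (f1 p.2 + f2 p.2) | p <- w].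
  by rewrite -map_comp; apply: eq_map => p; rewrite /= gpowzD.
rewrite EE3 => h.
have -> : (Ew f3 w * (Ew f1 w * Ew f2 w)^-1 =
   (Ew f3 w * (Ew (fun s => f1 s + f2 s) w)^-1) *
   (Ew (fun s => f1 s + f2 s) w * (Ew f1 w * Ew f2 w)^-1))%g.
  by rewrite !mulgA mulgVK.
apply: (le_trans (nuM Hnu _ _)); apply: lerD.
  exact: lip_w.
rewrite -(nuV Hnu) invgM invgK; exact: h.
Qed.

Lemma D_ge0 (S : seq G) (D : R) :
  (forall x y, gen S x -> gen S y -> nu (x * y * x^-1 * y^-1)%g <= D) -> 0 <= D.
Proof.
move=> HD; have := HD _ _ (gen_one S) (gen_one S).
by rewrite invg1 !mulg1 (nu1 Hnu).
Qed.

Hypothesis hFM : FM G.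

Lemma wcvg w : cvg (wseq nu w @ \oo).
Proof.
have [D HD] := FM_bound Hnu hFM (map fst w).
have D0 := D_ge0 HD.
have -> : wseq nu w = dn (fun n => nu (weval n w)) by [].
apply: (@fekete_q _ _ (2 * Mw nu w + (size w)%:R * D)).
- by move=> n; apply: nu_ge0.
- by apply: addr_ge0; [apply: mulr_ge0 => //; apply: Mw_ge0 | apply: mulr_ge0].
move=> n m.
rewrite (wevalE (n + m)%N).
apply: (le_trans (nu_le_div Hnu _ (weval n w * weval m w)%g)).
rewrite addrC; apply: lerD; first exact: nuM.
rewrite (wevalE n) (wevalE m); apply: qadd => // s.
rewrite natrD mulrDr.
set x := s * n%:R; set y := s * m%:R; rewrite !intrD.
have := fl_le x; have := fl_le y; have := fl_le (x + y).
have := fl_gt x; have := fl_gt y; have := fl_gt (x + y).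
rewrite ler_norml; move=> *; apply/andP; split; lra.
Qed.

End Words3.

Local Close Scope int_scope.

Section Main.
Local Open Scope ring_scope.
Local Open Scope classical_set_scope.
Variables (R : realType) (G : groupType) (nu : G -> R).
Hypothesis Hnu : is_ci_pseudonorm nu.
Hypothesis hFM : FM G.
Implicit Types w : word R G.

Let U w := fun n => nu (weval n w).

Lemma wnormE w : wnorm nu w = lim (dn (U w) @ \oo). Proof. by []. Qed.
Lemma cvgU w : cvg (dn (U w) @ \oo). Proof. exact: (wcvg Hnu hFM). Qed.

Lemma weval_nil n : weval n ([::] : word R G) = 1%g. Proof. by []. Qed.

Lemma wnorm_nil : wnorm nu ([::] : word R G) = 0.
Proof.
rewrite wnormE; have -> : U [::] = fun _ => 0.
  by apply/funext => n; rewrite /U weval_nil (nu1 Hnu).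
exact: lim_dn0.
Qed.

Lemma wnorm_ge0 w : 0 <= wnorm nu w.
Proof. by rewrite wnormE; apply: lim_ge0; [move=> n; apply: nu_ge0 | apply: cvgU]. Qed.

Lemma wle w v1 v2 (C : R) :
  (forall n, nu (weval n w) <= nu (weval n v1) + nu (weval n v2) + C) ->
  wnorm nu w <= wnorm nu v1 + wnorm nu v2.
Proof. by move=> H; rewrite !wnormE; apply: (lim_le3 (C := C)) => //; apply: cvgU. Qed.

Lemma wle1 w v (C : R) :
  (forall n, nu (weval n w) <= nu (weval n v) + C) -> wnorm nu w <= wnorm nu v.
Proof.
move=> H; rewrite -[X in _ <= X]addr0 -wnorm_nil; apply: (wle (C := C)) => n.
by rewrite weval_nil (nu1 Hnu) addr0.
Qed.

Lemma wle0 w (C : R) : (forall n, nu (weval n w) <= C) -> wnorm nu w = 0.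
Proof.
move=> H; apply/eqP; rewrite eq_le wnorm_ge0 andbT -wnorm_nil.
apply: (wle1 (C := C)) => n; by rewrite weval_nil (nu1 Hnu) add0r.
Qed.

Lemma nu_tri x y z : nu (x * z)%g <= nu (x * y^-1)%g + nu (y * z)%g.
Proof. by rewrite -{1}(mulgVK y x) -mulgA; apply: nuM. Qed.

Lemma wbar_cat w1 w2 : wbar (w1 ++ w2) = wbar w2 ++ wbar w1.
Proof. by rewrite /wbar map_cat rev_cat. Qed.

Lemma eqv_refl w : wequiv nu w w.
Proof.
apply: (wle0 (C := 2 * Mw nu w)) => n; rewrite /wconcat weval_cat.
exact: bar_bound.
Qed.

Lemma eqv_sym w1 w2 : wequiv nu w1 w2 -> wequiv nu w2 w1.
Proof.
rewrite /wequiv /wconcat => H; apply/eqP; rewrite eq_le wnorm_ge0 andbT -H.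
apply: (wle1 (C := 2 * Mw nu w1 + 2 * Mw nu w2)) => n; rewrite !weval_cat.
set X1 := weval n w1; set X2 := weval n w2.
set B1 := weval n (wbar w1); set B2 := weval n (wbar w2).
apply: (le_trans (nu_tri X2 X1 B1)).
have h1 : nu (X1 * B1)%g <= 2 * Mw nu w1 by exact: bar_bound.
have h2 : nu (X2 * B2)%g <= 2 * Mw nu w2 by exact: bar_bound.
have h3 : nu (X2 * X1^-1)%g <= nu (X1 * B2)%g + nu (X2 * B2)%g.
  rewrite -(nuV Hnu) invgM invgK; apply: (le_trans (nu_tri _ B2^-1 _)).
  by rewrite invgK -(nuV Hnu (B2^-1 * X2^-1)%g) invgM !invgK.
lra.
Qed.

Lemma eqv_trans w1 w2 w3 : wequiv nu w1 w2 -> wequiv nu w2 w3 -> wequiv nu w1 w3.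
Proof.
rewrite /wequiv /wconcat => H1 H2; apply/eqP; rewrite eq_le wnorm_ge0 andbT.
rewrite -[X in _ <= X]addr0 -{1}H1 -H2.
apply: (wle (C := 2 * Mw nu w2)) => n; rewrite !weval_cat.
set X1 := weval n w1; set X2 := weval n w2; set X3 := weval n w3.
set B2 := weval n (wbar w2); set B3 := weval n (wbar w3).
have h2 : nu (X2 * B2)%g <= 2 * Mw nu w2 by exact: bar_bound.
apply: (le_trans (nu_tri X1 B2^-1 B3)); rewrite invgK.
have : nu (B2^-1 * B3)%g <= nu (X2 * B2)%g + nu (X2 * B3)%g.
  apply: (le_trans (nu_tri _ X2 _)).
  by rewrite -(nuV Hnu (B2^-1 * X2^-1)%g) invgM !invgK.
lra.
Qed.

Lemma eqv_cat w1 w1' w2 w2' : wequiv nu w1 w1' -> wequiv nu w2 w2' ->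
  wequiv nu (wconcat w1 w2) (wconcat w1' w2').
Proof.
rewrite /wequiv /wconcat => H1 H2; apply/eqP; rewrite eq_le wnorm_ge0 andbT.
rewrite -[X in _ <= X]addr0 -{1}H1 -H2.
apply: (wle (C := 0)) => n; rewrite wbar_cat !weval_cat addr0 !mulgA.
by rewrite -(mulgA (weval n w1)); apply: nu_mid.
Qed.

Lemma gen_Ew (S : seq G) f w : (forall p, p \in w -> gen S p.1) -> gen S (Ew f w).
Proof.
move=> H; rewrite /Ew; apply: subgrp_prod; first exact: gen_subgrp.
by move=> x /mapP [p pw ->]; apply: gen_gpowz; apply: H.
Qed.

Lemma eqv_comm w1 w2 : wequiv nu (wconcat w1 w2) (wconcat w2 w1).
Proof.
have [D HD] := FM_bound Hnu hFM (map fst (w1 ++ w2)).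
rewrite /wequiv /wconcat.
eapply (@wle0 _ (D + 2 * Mw nu w1 + 2 * Mw nu w2)) => n.
rewrite wbar_cat !weval_cat.
set X1 := weval n w1; set X2 := weval n w2.
set B1 := weval n (wbar w1); set B2 := weval n (wbar w2).
have g1 : gen (map fst (w1 ++ w2)) X1.
  by rewrite /X1 wevalE; apply: gen_Ew => p pw; apply: gen_base; rewrite map_f // mem_cat pw.
have g2 : gen (map fst (w1 ++ w2)) X2.
  by rewrite /X2 wevalE; apply: gen_Ew => p pw; apply: gen_base; rewrite map_f // mem_cat pw orbT.
have hc := HD _ _ g1 g2.
have h1 : nu (X1 * B1)%g <= 2 * Mw nu w1 by exact: bar_bound.
have h2 : nu (X2 * B2)%g <= 2 * Mw nu w2 by exact: bar_bound.
have -> : (X1 * X2 * (B1 * B2) = (X1 * X2 * X1^-1 * X2^-1) * (X2 * (X1 * B1) * B2))%g.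
  by rewrite !mulgA mulgVK mulgVK.
apply: (le_trans (nuM Hnu _ _)).
have := nu_mid Hnu X2 B2 (X1 * B1)%g.
lra.
Qed.

Lemma wscale_cat a w1 w2 : wscale a (w1 ++ w2) = wscale a w1 ++ wscale a w2.
Proof. by rewrite /wscale map_cat. Qed.

Lemma wscale_bar a w : wscale a (wbar w) = wbar (wscale a w).
Proof.
rewrite /wscale /wbar map_rev -!map_comp; congr rev; apply: eq_map => p /=.
by rewrite mulrN.
Qed.

Lemma wscaleA a b w : wscale a (wscale b w) = wscale (a * b) w.
Proof. by rewrite /wscale -map_comp; apply: eq_map => p /=; rewrite mulrA. Qed.

Lemma wscale1 w : wscale 1 w = w.
Proof. by rewrite /wscale (eq_map (g := id)) ?map_id // => -[g s] /=; rewrite mul1r. Qed.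

Lemma wnorm_cat w1 w2 : wnorm nu (wconcat w1 w2) <= wnorm nu w1 + wnorm nu w2.
Proof.
apply: (wle (C := 0)) => n; rewrite /wconcat weval_cat addr0; exact: nuM.
Qed.

Lemma wnorm_eqv w w' : wequiv nu w w' -> wnorm nu w = wnorm nu w'.
Proof.
have key : forall v v', wequiv nu v v' -> wnorm nu v <= wnorm nu v'.
  move=> v v'; rewrite /wequiv /wconcat => H.
  rewrite -[X in _ <= X]add0r -{1}H.
  apply: (wle (C := 2 * Mw nu v')) => n; rewrite weval_cat.
  set X := weval n v; set X' := weval n v'; set B' := weval n (wbar v').
  have h : nu (X' * B')%g <= 2 * Mw nu v' by exact: bar_bound.
  apply: (le_trans (nu_le_div Hnu X B'^-1)); rewrite invgK (nuV Hnu).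
  have : nu B' <= nu (X' * B')%g + nu X'.
    by apply: (le_trans (nu_le_div Hnu _ X'^-1)); rewrite invgK (nuV Hnu) nuC.
  lra.
move=> H; apply/eqP; rewrite eq_le key //; apply: key; exact: eqv_sym.
Qed.

Lemma Ew_zero w : Ew (fun _ => 0%R) w = 1%g.
Proof. by elim: w => [|p w IH] //=; rewrite /Ew /= in IH *; rewrite IH mulg1. Qed.

Lemma weval0 w : weval 0 w = 1%g.
Proof.
rewrite wevalE -[RHS](Ew_zero w); congr prod_seq; apply: eq_map => p /=.
by rewrite mulr0 floor0.
Qed.

Lemma nu_abs_diff x y : `|nu x - nu y| <= nu (x * y^-1)%g.
Proof.
have h1 := nu_le_div Hnu y x; rewrite -(nuV Hnu (y * x^-1)%g) invgM invgK in h1.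
have h2 := nu_le_div Hnu x y.
rewrite ler_norml; apply/andP; split; lra.
Qed.

Lemma nu_scale_neg w : exists C : R, forall n,
  nu (weval n (wscale (-1) w)) <= nu (weval n w) + C.
Proof.
have [D HD] := FM_bound Hnu hFM (map fst w).
exists (2 * Mw nu w + (size w)%:R * D) => n.
rewrite weval_scale (wevalE n).
set Y := Ew _ w; set X := Ew _ w.
have h : nu (Ew (fun _ => 0%R) w * (Y * X)^-1)%g <= 2 * Mw nu w + (size w)%:R * D.
  apply: qadd => // s; rewrite mulN1r mulNr.
  set x := s * n%:R; rewrite sub0r intrN normrN intrD.
  have := fl_le x; have := fl_le (- x); have := fl_gt x; have := fl_gt (- x).
  rewrite ler_norml; move=> *; apply/andP; split; lra.
rewrite Ew_zero mul1g (nuV Hnu) in h.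
apply: (le_trans (nu_le_div Hnu Y X^-1)); rewrite invgK (nuV Hnu).
lra.
Qed.

Lemma wnorm_neg w : wnorm nu (wscale (-1) w) = wnorm nu w.
Proof.
have key : forall v, wnorm nu (wscale (-1) v) <= wnorm nu v.
  by move=> v; have [C HC] := nu_scale_neg v; apply: (wle1 (C := C)).
apply/eqP; rewrite eq_le key /=.
have E : w = wscale (-1) (wscale (-1) w) by rewrite wscaleA mulrNN mulr1 wscale1.
by rewrite {1}E key.
Qed.

Lemma wnorm_pos a w : 0 < a -> wnorm nu (wscale a w) = a * wnorm nu w.
Proof.
move=> a0.
rewrite (wnormE (wscale a w)).
apply: (lim_scale (u := U w) (C := \sum_(p <- w) (`|p.2| + 2) * nu p.1)) => //.
- by rewrite /U weval0 (nu1 Hnu).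
- exact: cvgU.
move=> n; rewrite /U.
apply: (le_trans (nu_abs_diff _ _)).
rewrite weval_scale wevalE; apply: (@lip_wK _ _ _ Hnu _ _ _ (fun s => `|s| + 2)) => s.
set m := `|Num.floor (a * n%:R)|%N.
have mE : (m%:R : R) = (Num.floor (a * n%:R))%:~R.
  by rewrite /m pmulrn gez0_abs // floor_ge0 mulr_ge0 ?ler0n // ltW.
have hm1 : (m%:R : R) <= a * n%:R by rewrite mE fl_le.
have hm2 : a * n%:R - 1 < (m%:R : R) by rewrite mE fl_gt.
set t := a * n%:R - m%:R.
have t0 : 0 <= t by rewrite subr_ge0.
have t1 : t <= 1 by rewrite /t; lra.
have hst : `|s * t| <= `|s|.
  by rewrite normrM (ger0_norm t0) -[X in _ <= X]mulr1 ler_wpM2l.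
move: hst; rewrite ler_norml => /andP [hz1 hz2].
have hxy : a * s * n%:R - s * m%:R = s * t by rewrite /t; ring.
move: hxy hz1 hz2; set x := a * s * n%:R; set y := s * m%:R; set z := s * t => hxy hz1 hz2.
rewrite intrB.
have := fl_le x; have := fl_le y; have := fl_gt x; have := fl_gt y.
rewrite ler_norml; move=> *; apply/andP; split; lra.
Qed.

Lemma wnorm_scale a w : wnorm nu (wscale a w) = `|a| * wnorm nu w.
Proof.
case: (ltgtP a 0) => ha.
- rewrite ltr0_norm // -wnorm_pos ?oppr_gt0 //.
  by rewrite -wnorm_neg wscaleA mulN1r.
- by rewrite gtr0_norm // wnorm_pos.
- rewrite ha normr0 mul0r; apply: (wle0 (C := 0)) => n.
  rewrite weval_scale.
  have -> : (fun s : R => Num.floor (0 * s * n%:R)) = (fun _ => 0%R).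
    by apply/funext => s; rewrite !mul0r floor0.
  by rewrite Ew_zero (nu1 Hnu).
Qed.

Lemma eqv_scale l w w' : wequiv nu w w' -> wequiv nu (wscale l w) (wscale l w').
Proof.
rewrite /wequiv /wconcat -wscale_bar -wscale_cat wnorm_scale => ->.
by rewrite mulr0.
Qed.

Lemma eqv_distr a b w :
  wequiv nu (wscale (a + b) w) (wconcat (wscale a w) (wscale b w)).
Proof.
have [D HD] := FM_bound Hnu hFM (map fst w).
rewrite /wequiv /wconcat.
apply: (wle0 (C := 2 * Mw nu w + (size w)%:R * D +
   (2 * Mw nu (wscale a w) + 2 * Mw nu (wscale b w)))) => n.
rewrite wbar_cat !weval_cat.
set Z := weval n (wscale (a + b) w).
set Xa := weval n (wscale a w); set Xb := weval n (wscale b w).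
set Ba := weval n (wbar (wscale a w)); set Bb := weval n (wbar (wscale b w)).
have ha : nu (Xa * Ba)%g <= 2 * Mw nu (wscale a w) by exact: bar_bound.
have hb : nu (Xb * Bb)%g <= 2 * Mw nu (wscale b w) by exact: bar_bound.
have -> : (Z * (Bb * Ba) = (Z * (Xa * Xb)^-1) * (Xa * (Xb * Bb) * Ba))%g.
  by rewrite invgM !mulgA mulgVK mulgVK.
apply: (le_trans (nuM Hnu _ _)); apply: lerD.
  rewrite /Z /Xa /Xb !weval_scale; apply: qadd => // s.
  have -> : (a + b) * s * n%:R = a * s * n%:R + b * s * n%:R by ring.
  set x := a * s * n%:R; set y := b * s * n%:R; rewrite intrB intrD.
  have := fl_le x; have := fl_le y; have := fl_le (x + y).
  have := fl_gt x; have := fl_gt y; have := fl_gt (x + y).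
  rewrite ler_norml; move=> *; apply/andP; split; lra.
have := nu_mid Hnu Xa Ba (Xb * Bb)%g.
lra.
Qed.

End Main.

Theorem proposition2p3 (R : realType) (G : groupType) (nu : G -> R) :
  FM G -> is_ci_pseudonorm nu -> A_nu_normed_vector_space nu.
Proof.
move=> hFM Hnu; rewrite /A_nu_normed_vector_space.
split; first exact: (wcvg Hnu hFM).
split; first exact: (eqv_refl Hnu hFM).
split; first exact: (eqv_sym Hnu hFM).
split; first exact: (eqv_trans Hnu hFM).
split; first exact: (eqv_cat Hnu hFM).
split; first exact: (eqv_scale Hnu hFM).
split; first by move=> w1 w2 w3; rewrite /wconcat catA; exact: (eqv_refl Hnu hFM).
split; first exact: (eqv_comm Hnu hFM).
split; first by move=> w; exact: (eqv_refl Hnu hFM).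
split.
  move=> w; exists (wbar w); have := eqv_refl Hnu hFM w.
  by rewrite /wequiv /wconcat /= cats0.
split; first by move=> a b w; rewrite wscaleA; exact: (eqv_refl Hnu hFM).
split; first by move=> w; rewrite wscale1; exact: (eqv_refl Hnu hFM).
split; first by move=> a w1 w2; rewrite /wconcat wscale_cat; exact: (eqv_refl Hnu hFM).
split; first exact: (eqv_distr Hnu hFM).
split; first exact: (wnorm_eqv Hnu hFM).
split; first exact: (wnorm_ge0 Hnu hFM).
split; first by move=> w; rewrite /wequiv /wconcat /= cats0.
split; first exact: (wnorm_scale Hnu hFM).
exact: (wnorm_cat Hnu hFM).
Qed.
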